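(* Let $X_m$ be a space of labelled lines and let $T_n$ be an $n$-rule map on $X_m$ with defining rule sequence $r_1,\dots,r_n$, $r_i=r(\,\cdot\,;\theta_i,o_i,L_{a_i})$, and let $c_1,\dots,c_n$ be the similarity coefficients of the rules and $C=c_1c_2\cdots c_n$ the similarity coefficient of the induced map $\hat T_n=T_n^n$. If $0\le C<1$, then $T_n$ admits a unique periodic orbit of period $n$.
   Context: $X_m\subset\mathbb{R}^2$ is a union of $m\ge3$ lines, labelled $L_1,\dots,L_m$, not all concurrent, with at least one line neither parallel nor perpendicular to any other. For a point $x$ on a line of $X_m$, a line $L_j$ of $X_m$, and $\theta\in(0,\pi/2)$, there are two lines through $x$ meeting $L_j$ at angle $\theta$; their intersection points with $L_j$ are the orientation $0$ and orientation $1$, angle $\theta$ projections of $x$ onto $L_j$ (the labels $0,1$ being assigned by the fixed convention ''left'' and ''right'' projection as seen from $x$, under which, for fixed $\theta$ and orientation, the projection from one line onto another is a projection along a fixed direction); for $\theta=\pi/2$ there is a single (perpendicular) projection; if $x\in L_j$ its projection is $x$. A rule $r(x;\theta,o,L_j)$ maps $x\in X_m$ to its angle $\theta$, orientation $o$ projection onto $L_j$ ($\theta\in(0,\pi/2]$, $o\in\{0,1\}$). A rule sequence is a sequence of $n\ge m$ rules $r_1,\dots,r_n$ such that consecutive rules, including $r_n$ and $r_1$, map onto different lines, and every line of $X_m$ is mapped onto by at least one rule. The $n$-rule map $T_n:X_m\to X_m$ is iterated by cycling through the rules: the $k$-th iterate applies $r_{((k-1)\bmod n)+1}$ to the $(k-1)$-th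 iterate, so e.g. $T_n^{n+2}(x)=r_2(r_1(r_n(\cdots r_2(r_1(x)))))$. $T_n$ is assumed non-redundant (there is no rule sequence of length $n'$ with $m\le n'<n$ giving the same orbits for all $x$). The orbit of $x$ is $\{x,T_n(x),T_n^2(x),\dots\}$. With $a_0:=a_n$, the restriction of $r_i$ to $L_{a_{i-1}}$ (mapping into $L_{a_i}$) satisfies $d(r_i(x),r_i(y))=c_i\,d(x,y)$ for all $x,y\in L_{a_{i-1}}$, for a constant $c_i\ge0$ ($d$ the Euclidean metric); $c_i$ is the similarity coefficient of $r_i$. The induced map $\hat T_n=T_n^n$ maps $L_{a_n}$ to itself. *)

(* Defs.v *)
From Stdlib Require Import Reals Lra Lia Arith.
Open Scope R_scope.

Definition pt := (R * R)%type.

Definition padd (x y : pt) : pt := (fst x + fst y, snd x + snd y).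
Definition psub (x y : pt) : pt := (fst x - fst y, snd x - snd y).
Definition pscale (t : R) (x : pt) : pt := (t * fst x, t * snd x).
Definition cross (x y : pt) : R := fst x * snd y - snd x * fst y.
Definition dot (x y : pt) : R := fst x * fst y + snd x * snd y.
Definition dist (x y : pt) : R :=
  sqrt ((fst x - fst y) ^ 2 + (snd x - snd y) ^ 2).

Record line := mkLine { lbase : pt ; ldir : pt }.

Definition well_formed_line (l : line) : Prop := ldir l <> (0, 0).

Definition on_line (l : line) (x : pt) : Prop :=
  exists t : R, x = padd (lbase l) (pscale t (ldir l)).

Definition parallel (l1 l2 : line) : Prop := cross (ldir l1) (ldir l2) = 0.
Definition perpendicular (l1 l2 : line) : Prop := dot (ldir l1) (ldir l2) = 0.

Definition rot (th : R) (u : pt) : pt :=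
  (cos th * fst u - sin th * snd u, sin th * fst u + cos th * snd u).

(* Angle th, orientation o projection of x onto line l: intersection with l
   of the line through x with direction rot(th) u (o = false, "orientation 0")
   or rot(-th) u (o = true, "orientation 1"), u the direction of l.
   The unoriented projection direction does not depend on the sign of u
   nor on the side of l on which x lies, as in the paper's convention.
   For th = PI/2 both coincide with the perpendicular projection;
   if x lies on l, the result is x. *)
Definition proj (l : line) (th : R) (o : bool) (x : pt) : pt :=
  let u := ldir l in
  let v := if o then rot (- th) u else rot th u in
  padd (lbase l) (pscale (cross (psub x (lbase l)) v / cross u v) u).

(* a rule r(.; theta, o, L_a) ; lines are indexed 0..m-1 *)
Record rule := mkRule { rth : R ; ro : bool ; ra : nat }.

Definition apply_rule (L : nat -> line) (r : rule) (x : pt) : pt :=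
  proj (L (ra r)) (rth r) (ro r) x.

Definition inX (L : nat -> line) (m : nat) (x : pt) : Prop :=
  exists i, (i < m)%nat /\ on_line (L i) x.

Definition lines_space (L : nat -> line) (m : nat) : Prop :=
  (3 <= m)%nat /\
  (forall i, (i < m)%nat -> well_formed_line (L i)) /\
  (forall i j, (i < m)%nat -> (j < m)%nat -> i <> j ->
     exists x, on_line (L i) x /\ ~ on_line (L j) x) /\
  ~ (exists p, forall i, (i < m)%nat -> on_line (L i) p) /\
  (exists i, (i < m)%nat /\ forall j, (j < m)%nat -> j <> i ->
     ~ parallel (L i) (L j) /\ ~ perpendicular (L i) (L j)).

(* r 0, ..., r (n-1) is a rule sequence (0-indexed version of r_1..r_n) *)
Definition rule_sequence (m n : nat) (r : nat -> rule) : Prop :=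
  (m <= n)%nat /\
  (forall i, (i < n)%nat ->
     0 < rth (r i) <= PI / 2 /\ (ra (r i) < m)%nat) /\
  (forall i, (i < n)%nat -> ra (r i) <> ra (r ((i + 1) mod n))) /\
  (forall j, (j < m)%nat -> exists i, (i < n)%nat /\ ra (r i) = j).

Fixpoint Titer (L : nat -> line) (n : nat) (r : nat -> rule) (k : nat) (x : pt)
  : pt :=
  match k with
  | O => x
  | S k' => apply_rule L (r (k' mod n)) (Titer L n r k' x)
  end.

Definition in_orbit (L : nat -> line) (n : nat) (r : nat -> rule)
  (x y : pt) : Prop := exists k, y = Titer L n r k x.

Definition non_redundant (L : nat -> line) (m n : nat) (r : nat -> rule)
  : Prop :=
  ~ exists (n' : nat) (r' : nat -> rule),
      (m <= n')%nat /\ (n' < n)%nat /\ rule_sequence m n' r' /\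
      forall x, inX L m x ->
        forall y, in_orbit L n' r' x y <-> in_orbit L n r x y.

(* c i is the similarity coefficient of r i, restricted to the line
   L_{a_{i-1}} (indices cyclic, a_{-1} := a_{n-1}) *)
Definition similarity_coeffs (L : nat -> line) (n : nat) (r : nat -> rule)
  (c : nat -> R) : Prop :=
  forall i, (i < n)%nat ->
    0 <= c i /\
    forall x y,
      on_line (L (ra (r ((i + n - 1) mod n)))) x ->
      on_line (L (ra (r ((i + n - 1) mod n)))) y ->
      dist (apply_rule L (r i) x) (apply_rule L (r i) y) = c i * dist x y.

Fixpoint prodR (c : nat -> R) (n : nat) : R :=
  match n with
  | O => 1
  | S k => prodR c k * c k
  end.

(* Main.v *)
Require Import Defs.
From Stdlib Require Import Reals Lra Lia Arith.
Open Scope R_scope.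

Definition comb (s : R) (x y : pt) : pt := padd x (pscale s (psub y x)).

Lemma proj_aff l th o s x y :
  proj l th o (comb s x y) = comb s (proj l th o x) (proj l th o y).
Proof.
  destruct l as [[b1 b2] [u1 u2]]; destruct x as [x1 x2]; destruct y as [y1 y2].
  unfold proj, comb, padd, pscale, psub, cross; destruct o; simpl; f_equal; unfold Rdiv; ring.
Qed.

Lemma Titer_aff L n r k s x y :
  Titer L n r k (comb s x y) = comb s (Titer L n r k x) (Titer L n r k y).
Proof.
  induction k; simpl; [reflexivity|]. rewrite IHk. unfold apply_rule. apply proj_aff.
Qed.

Lemma apply_on L rl x : on_line (L (ra rl)) (apply_rule L rl x).
Proof. unfold apply_rule, proj. simpl. eexists. reflexivity. Qed.

Lemma iter_prop L n r c (Hn : (0 < n)%nat) (Hc : similarity_coeffs L n r c) :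
  forall k, (k <= n)%nat -> forall x y,
    on_line (L (ra (r ((n-1) mod n)))) x -> on_line (L (ra (r ((n-1) mod n)))) y ->
    on_line (L (ra (r ((k+n-1) mod n)))) (Titer L n r k x) /\
    Defs.dist (Titer L n r k x) (Titer L n r k y) = prodR c k * Defs.dist x y.
Proof.
  induction k; intros Hk x y Hx Hy.
  - simpl. split; [exact Hx|ring].
  - destruct (IHk ltac:(lia) x y Hx Hy) as [H1 H2].
    destruct (IHk ltac:(lia) y x Hy Hx) as [H3 _].
    simpl Titer. rewrite (Nat.mod_small k n) by lia.
    replace ((S k + n - 1) mod n)%nat with k.
    2:{ replace (S k + n - 1)%nat with (k + 1*n)%nat by lia.
        rewrite Nat.mod_add by lia. rewrite Nat.mod_small by lia. reflexivity. }
    split; [apply apply_on|].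
    destruct (Hc k ltac:(lia)) as [_ Hs].
    rewrite (Hs _ _ H1 H3), H2. simpl. ring.
Qed.

Lemma Titer_on L n r k x : on_line (L (ra (r (k mod n)))) (Titer L n r (S k) x).
Proof. simpl. apply apply_on. Qed.

Lemma dist0 x y : Defs.dist x y = 0 -> x = y.
Proof.
  destruct x as [x1 x2]; destruct y as [y1 y2]; unfold Defs.dist; simpl; intro H.
  apply sqrt_eq_0 in H; [|pose proof (pow2_ge_0 (x1-y1)); pose proof (pow2_ge_0 (x2-y2)); lra].
  simpl in H. rewrite !Rmult_1_r in H.
  pose proof (Rle_0_sqr (x1-y1)); pose proof (Rle_0_sqr (x2-y2)); unfold Rsqr in *.
  assert ((x1-y1)*(x1-y1) = 0) by lra. assert ((x2-y2)*(x2-y2) = 0) by lra.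
  apply Rmult_integral in H2; apply Rmult_integral in H3.
  assert (x1 = y1) by lra. assert (x2 = y2) by lra. subst; reflexivity.
Qed.

Theorem theorem2 (L : nat -> line) (m n : nat) (r : nat -> rule)
  (c : nat -> R) :
  lines_space L m ->
  rule_sequence m n r ->
  non_redundant L m n r ->
  similarity_coeffs L n r c ->
  0 <= prodR c n < 1 ->
  exists x, inX L m x /\ Titer L n r n x = x /\
    forall y, inX L m y -> Titer L n r n y = y ->
      forall z, in_orbit L n r y z <-> in_orbit L n r x z.
Proof.
  intros HL HR _ Hc HC.
  destruct HL as [Hm [Hwf _]].
  destruct HR as [Hmn [Hth _]].
  assert (Hn : (0 < n)%nat) by lia.
  set (j := ra (r ((n-1) mod n))).
  assert (Hj : (j < m)%nat).
  { unfold j. apply Hth. apply Nat.mod_upper_bound. lia. }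
  assert (Hidx : ((n + n - 1) mod n)%nat = ((n-1) mod n)%nat).
  { replace (n + n - 1)%nat with ((n-1) + 1*n)%nat by lia. rewrite Nat.mod_add by lia. reflexivity. }
  pose proof (iter_prop L n r c Hn Hc n (le_n n)) as IP.
  rewrite Hidx in IP. fold j in IP.
  set (C := prodR c n) in *.
  set (G := Titer L n r n) in *.
  assert (Tn : forall y, on_line (L j) (G y)).
  { intro y0. unfold G, j. pose proof (Titer_on L n r (n-1) y0) as H.
    replace (S (n-1)) with n in H by lia. exact H. }
  assert (Uniq : forall x y, on_line (L j) x -> on_line (L j) y -> G x = x -> G y = y -> x = y).
  { intros x y Hx Hy Gx Gy. destruct (IP x y Hx Hy) as [_ Hd].
    rewrite Gx, Gy in Hd. apply dist0.
    assert (0 <= Defs.dist x y) by (unfold Defs.dist; apply sqrt_pos). nra. }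
  destruct (L j) as [[b1 b2] [u1 u2]] eqn:ELj.
  assert (Hu : u1 * u1 + u2 * u2 > 0).
  { pose proof (Hwf j Hj) as W. unfold well_formed_line in W. rewrite ELj in W. simpl in W.
    destruct (Req_dec u1 0); destruct (Req_dec u2 0); subst; [exfalso; apply W; reflexivity|nra|nra|nra]. }
  set (x0 := padd (b1,b2) (pscale 0 (u1,u2))).
  set (x1 := padd (b1,b2) (pscale 1 (u1,u2))).
  assert (O0 : on_line (mkLine (b1,b2) (u1,u2)) x0) by (exists 0; reflexivity).
  assert (O1 : on_line (mkLine (b1,b2) (u1,u2)) x1) by (exists 1; reflexivity).
  destruct (IP x0 x1 O0 O1) as [[g0 E0] Hd].
  destruct (IP x1 x0 O1 O0) as [[g1 E1] _].
  simpl in E0, E1. fold G in E0, E1.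
  rewrite E0, E1 in Hd.
  set (d := g1 - g0).
  assert (Hd2 : d * d = C * C).
  { unfold Defs.dist, x0, x1, padd, pscale in Hd; cbn [fst snd] in Hd.
    replace ((b1 + g0 * u1 - (b1 + g1 * u1)) ^ 2 + (b2 + g0 * u2 - (b2 + g1 * u2)) ^ 2)
      with ((d*d) * (u1*u1+u2*u2)) in Hd by (unfold d; ring).
    replace ((b1 + 0 * u1 - (b1 + 1 * u1)) ^ 2 + (b2 + 0 * u2 - (b2 + 1 * u2)) ^ 2)
      with (u1*u1+u2*u2) in Hd by ring.
    apply (f_equal (fun z => z*z)) in Hd.
    replace (C * sqrt (u1 * u1 + u2 * u2) * (C * sqrt (u1 * u1 + u2 * u2))) with
      (C*C * (sqrt (u1 * u1 + u2 * u2) * sqrt (u1 * u1 + u2 * u2))) in Hd by ring.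
    assert (0 <= d*d*(u1*u1+u2*u2)) by (apply Rmult_le_pos; [apply Rle_0_sqr|lra]).
    rewrite !sqrt_sqrt in Hd by lra.
    apply Rmult_eq_reg_r with (u1*u1+u2*u2). 2: lra. lra. }
  assert (Hd1 : 1 - d <> 0) by nra.
  set (t := g0 / (1 - d)).
  set (xs := comb t x0 x1).
  assert (Os : on_line (mkLine (b1,b2) (u1,u2)) xs).
  { exists t. unfold xs, comb, x0, x1, padd, pscale, psub; simpl. f_equal; ring. }
  assert (Fs : G xs = xs).
  { unfold xs, G. rewrite Titer_aff. fold G. rewrite E0, E1.
    unfold comb, x0, x1, padd, pscale, psub; simpl.
    assert (t = g0 + t * d) by (unfold t; field; exact Hd1).
    f_equal.
    - replace (b1 + 0 * u1 + t * (b1 + 1 * u1 - (b1 + 0 * u1))) with (b1 + t*u1) by ring.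
      replace (b1 + g0 * u1 + t * (b1 + g1 * u1 - (b1 + g0 * u1))) with (b1 + (g0 + t*d)*u1) by (unfold d; ring).
      rewrite <- H. reflexivity.
    - replace (b2 + 0 * u2 + t * (b2 + 1 * u2 - (b2 + 0 * u2))) with (b2 + t*u2) by ring.
      replace (b2 + g0 * u2 + t * (b2 + g1 * u2 - (b2 + g0 * u2))) with (b2 + (g0 + t*d)*u2) by (unfold d; ring).
      rewrite <- H. reflexivity. }
  exists xs. split; [|split].
  - exists j. split; [exact Hj|]. rewrite ELj. exact Os.
  - exact Fs.
  - intros y Hy Gy z.
    assert (Oy : on_line (mkLine (b1,b2) (u1,u2)) y).
    { rewrite <- Gy. apply Tn. }
    assert (y = xs) by (apply Uniq; assumption). subst y. tauto.
Qed.
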